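(* Let $\tau$ be a smooth function on $S^1$ and let $\ell>0$. Let $\tau^\circ=\int_{S^1}\tau\,ds$, where $s$ is the unit coordinate on $S^1$. If $\tau^\circ\neq0$, let $\Psi=\ell\tau^\circ$. Then there is a smooth embedding $\iota:S^1\to\mathcal K_\Psi$ such that $\iota(S^1)$ is a spacelike curve whose induced metric $g$ and second fundamental form $K$ satisfy $\iota^*g=g_\ell$ and $\iota^*K=\tau\,g_\ell$. If $\tau^\circ=0$, then there exist $L>0$ and a smooth embedding $\iota:S^1\to\mathcal C_L$ such that $\iota(S^1)$ is a spacelike curve whose induced metric $g$ and second fundamental form $K$ satisfy $\iota^*g=g_\ell$ and $\iota^*K=\tau\,g_\ell$.
   Context: $S^1=\mathbb{R}/\mathbb{Z}$ with unit coordinate $s$ (so $\int_{S^1}ds=1$), and $g_\ell=\ell^2ds^2$. $\mathbb{R}^{1,1}$ is $\mathbb{R}^2$ with coordinates $(t,x)$, metric $-dt^2+dx^2$, time-oriented by $\partial_t$; $I_\pm=\{\pm t>|x|\}$. For $\Psi\neq0$, $B_\Psi$ is the linear boost with matrix $\begin{pmatrix}\cosh\Psi&\sinh\Psi\\ \sinh\Psi&\cosh\Psi\end{pmatrix}$; the Kasner surface $\mathcal K_\Psi$ is $I_+/\langle B_\Psi\rangle$ if $\Psi>0$ and $I_-/\langle B_\Psi\rangle$ if $\Psi<0$, with the inherited time-oriented Lorentzian metric. For $L>0$, the flat Lorentzian cylinder is $\mathcal C_L=\mathbb{R}^{1,1}/\langle(t,x)\mapsto(t,x+L)\rangle$. For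 a spacelike curve, the induced second fundamental form is $K(X,Y)=-\langle n,\nabla_XY\rangle$ with $n$ the future-pointing unit normal. *)

(* Defs.v *)
From Stdlib Require Import Reals ZArith.
From Coquelicot Require Import Coquelicot.
Open Scope R_scope.

Definition smooth (f : R -> R) : Prop := forall (n : nat) (x : R), ex_derive_n f n x.

(* A function on S^1 = R/Z, seen as a 1-periodic function of the unit coordinate s. *)
Definition periodic1 (f : R -> R) : Prop := forall s, f (s + 1) = f s.

Definition mink (u v : R * R) : R := - (fst u * fst v) + snd u * snd v.

Definition boost (Psi : R) (p : R * R) : R * R :=
  (cosh Psi * fst p + sinh Psi * snd p, sinh Psi * fst p + cosh Psi * snd p).

Definition xshift (L : R) (p : R * R) : R * R := (fst p, snd p + L).

(* I_+ = {t > |x|}, I_- = {-t > |x|}; K_Psi uses I_+ if Psi>0 and I_- if Psi<0. *)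
Definition kasner_domain (Psi : R) (p : R * R) : Prop :=
  if Rlt_dec 0 Psi then fst p > Rabs (snd p) else - fst p > Rabs (snd p).

Definition pt (ct cx : R -> R) (s : R) : R * R := (ct s, cx s).
Definition vel (ct cx : R -> R) (s : R) : R * R := (Derive ct s, Derive cx s).
Definition acc (ct cx : R -> R) (s : R) : R * R :=
  (Derive_n ct 2 s, Derive_n cx 2 s).

(* Future-pointing (t-component > 0) unit normal to a spacelike vector T. *)
Definition future_unit_normal (T : R * R) : R * R :=
  let q := sqrt (mink T T) in
  if Rlt_dec 0 (snd T) then (snd T / q, fst T / q)
  else (- snd T / q, - fst T / q).

(* A smooth map iota : S^1 -> K_Psi, described by a smooth lift
   s |-> (ct s, cx s) : R -> I_(+/-) of iota composed with R -> S^1 = R/Z;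
   the lift satisfies gamma(s+1) = B_Psi^k gamma(s) = B_(k Psi) gamma(s) for some
   integer k.  Embedding: injective on S^1 into the quotient (points of R^2
   are identified modulo the group <B_Psi> = {B_(m Psi)}), and an immersion
   (S^1 compact, quotient Hausdorff, so an injective immersion is an embedding). *)
Definition kasner_embedding (Psi : R) (ct cx : R -> R) : Prop :=
  smooth ct /\ smooth cx /\
  (exists k : Z, forall s, pt ct cx (s + 1) = boost (IZR k * Psi) (pt ct cx s)) /\
  (forall s, kasner_domain Psi (pt ct cx s)) /\
  (forall s s' (m : Z), pt ct cx s' = boost (IZR m * Psi) (pt ct cx s) ->
      exists j : Z, s' - s = IZR j) /\
  (forall s, vel ct cx s <> (0, 0)).

(* Same for a smooth embedding S^1 -> C_L = R^{1,1}/<(t,x) |-> (t,x+L)>. *)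
Definition cylinder_embedding (L : R) (ct cx : R -> R) : Prop :=
  smooth ct /\ smooth cx /\
  (exists k : Z, forall s, pt ct cx (s + 1) = xshift (IZR k * L) (pt ct cx s)) /\
  (forall s s' (m : Z), pt ct cx s' = xshift (IZR m * L) (pt ct cx s) ->
      exists j : Z, s' - s = IZR j) /\
  (forall s, vel ct cx s <> (0, 0)).

(* The image is a spacelike curve with iota^* g = g_l = l^2 ds^2 and
   iota^* K = tau g_l, where K(X,Y) = -<n, nabla_X Y> with n the future unit
   normal.  The flat metric descends from R^{1,1} (the deck groups act by
   isometries), so in the lift nabla_{gamma'} gamma' = gamma''. Both sides are
   symmetric 2-tensors on the 1-dimensional S^1, so they are compared on
   (d/ds, d/ds). *)
Definition realizes (tau : R -> R) (l : R) (ct cx : R -> R) : Prop :=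
  (forall s, mink (vel ct cx s) (vel ct cx s) > 0) /\
  (forall s, mink (vel ct cx s) (vel ct cx s) = l ^ 2) /\
  (forall s, - mink (future_unit_normal (vel ct cx s)) (acc ct cx s) = tau s * l ^ 2).

(* Main.v *)
Require Import Defs.
From Stdlib Require Import Reals ZArith Lra.
From Coquelicot Require Import Coquelicot.
Open Scope R_scope.

Fixpoint Cn (n : nat) (f : R -> R) : Prop :=
  match n with O => True | S n => (forall x, ex_derive f x) /\ Cn n (Derive f) end.

Lemma Cn_ext n : forall f g, (forall x, f x = g x) -> Cn n f -> Cn n g.
Proof.
  induction n as [|n IH]; simpl; auto.
  intros f g H [H1 H2]; split.
  - intro x; apply (ex_derive_ext f); auto.
  - apply (IH (Derive f)); auto. intro x; apply Derive_ext; auto.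
Qed.

Lemma Cn_S n : forall f, Cn (S n) f -> Cn n f.
Proof.
  induction n as [|n IH]; simpl; auto.
  intros f [H1 [H2 H3]]; split; auto.
  apply IH; simpl; auto.
Qed.

Lemma Cn_der n f g : (forall x, is_derive f x (g x)) -> Cn n g -> Cn (S n) f.
Proof.
  intros H Hg; simpl; split.
  - intro x; eexists; apply H.
  - apply (Cn_ext n g); auto. intro x; symmetry; apply is_derive_unique, H.
Qed.

Lemma Cn_der_inv n f : Cn (S n) f -> forall x, is_derive f x (Derive f x).
Proof. intros [H _] x; apply Derive_correct, H. Qed.

Lemma Cn_const n : forall c, Cn n (fun _ => c).
Proof.
  induction n; intro c; simpl; auto.
  apply (Cn_der n _ (fun _ => 0)); auto. intro x; apply (is_derive_const c x).
Qed.

Lemma Cn_plus n : forall f g, Cn n f -> Cn n g -> Cn n (fun x => f x + g x).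
Proof.
  induction n as [|n IH]; simpl; auto.
  intros f g Hf Hg.
  apply (Cn_der n _ (fun x => Derive f x + Derive g x)).
  - intro x; apply (is_derive_plus f g); apply Derive_correct; [apply Hf|apply Hg].
  - apply IH; [apply Hf|apply Hg].
Qed.

Lemma Cn_mult n : forall f g, Cn n f -> Cn n g -> Cn n (fun x => f x * g x).
Proof.
  induction n as [|n IH]; simpl; auto.
  intros f g Hf Hg.
  apply (Cn_der n _ (fun x => Derive f x * g x + f x * Derive g x)).
  - intro x. apply (is_derive_mult f g).
    apply Derive_correct, Hf. apply Derive_correct, Hg.
    intros; apply Rmult_comm.
  - apply Cn_plus; apply IH; try apply Hf; try apply Hg;
     apply (Cn_S n); simpl; auto.
Qed.

Lemma Cn_comp n : forall f g, Cn n f -> Cn n g -> Cn n (fun x => g (f x)).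
Proof.
  induction n as [|n IH]; simpl; auto.
  intros f g Hf Hg.
  apply (Cn_der n _ (fun x => Derive f x * Derive g (f x))).
  - intro x. apply (is_derive_comp g f); apply Derive_correct; [apply Hg|apply Hf].
  - apply Cn_mult; [apply Hf|]. apply IH; [|apply Hg].
    apply (Cn_S n); simpl; auto.
Qed.

Lemma Cn_exp n : Cn n exp.
Proof.
  induction n; simpl; auto.
  apply (Cn_der n _ exp); auto. intro; apply is_derive_exp.
Qed.

Lemma Cn_cont n f : Cn (S n) f -> forall x, continuous f x.
Proof. intros [H _] x; apply (ex_derive_continuous f), H. Qed.

Lemma Cn_RInt n f : Cn (S n) f -> Cn (S (S n)) (fun s => RInt f 0 s).
Proof.
  intros Hf. apply (Cn_der _ _ f); auto.
  intro x. apply (is_derive_RInt f _ 0); [|apply (Cn_cont n); auto].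
  apply filter_forall. intro y. apply (RInt_correct (V:=R_CompleteNormedModule)), ex_RInt_continuous.
  intros; apply (Cn_cont n); auto.
Qed.

Lemma Derive_n_Sl k : forall f x, Derive_n f (S k) x = Derive_n (Derive f) k x.
Proof.
  induction k as [|k IH]; intros f x.
  - simpl. apply Derive_ext; auto.
  - change (Derive (Derive_n f (S k)) x = Derive (Derive_n (Derive f) k) x).
    apply Derive_ext; auto.
Qed.

Lemma Cn_smooth_all f : (forall n, Cn n f) -> forall n x, ex_derive_n f n x.
Proof.
  intros H n. revert f H. induction n as [|n IH]; intros f H x; simpl; auto.
  destruct n as [|n].
  - apply (ex_derive_ext f); auto. apply (H 1%nat).
  - assert (Hd : forall m, Cn m (Derive f)) by (intro m; apply (H (S m))).
    specialize (IH _ Hd x). simpl in IH.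
    apply (ex_derive_ext (Derive_n (Derive f) n)); auto.
    intro t; symmetry; apply Derive_n_Sl.
Qed.

Lemma smooth_Cn n : forall f, (forall k x, ex_derive_n f k x) -> Cn n f.
Proof.
  induction n as [|n IH]; intros f H; simpl; auto. split.
  - intro x. apply (ex_derive_ext (Derive_n f 0)); auto. apply (H 1%nat).
  - apply IH. intros k x. destruct k; simpl; auto.
    apply (ex_derive_ext (Derive_n f (S k))). intro; apply Derive_n_Sl.
    apply (H (S (S k))).
Qed.

Lemma is_derive_lin2 (P Q : R -> R) s p q a b c :
  is_derive P s p -> is_derive Q s q ->
  is_derive (fun x => c + (a * P x + b * Q x)) s (a * p + b * q).
Proof.
  intros HP HQ.
  apply (is_derive_ext (fun x => plus c (plus (a * P x) (b * Q x)))); [reflexivity|].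
  replace (a * p + b * q) with (plus 0 (plus (a * p) (b * q))) by (unfold plus; simpl; ring).
  apply (is_derive_plus (fun _ => c)). apply (is_derive_const c s).
  apply (is_derive_plus (fun x => a * P x) (fun x => b * Q x)); apply is_derive_scal; auto.
Qed.

Lemma is_derive_lin2' (P Q : R -> R) (f : R -> R) s p q a b c d :
  is_derive P s p -> is_derive Q s q ->
  (forall x, f x = c + (a * P x + b * Q x)) -> d = a * p + b * q ->
  is_derive f s d.
Proof.
  intros HP HQ Hf ->. apply (is_derive_ext (fun x => c + (a * P x + b * Q x))).
  intro; symmetry; auto. apply is_derive_lin2; auto.
Qed.

Lemma realize_gen tau l ct cx P Q : 0 < l -> (forall s, 0 < P s) -> (forall s, P s * Q s = 1) ->
  (forall s, is_derive P s (l * tau s * P s)) -> (forall s, is_derive Q s (- (l * tau s * Q s))) ->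
  (forall s, is_derive ct s (l * (P s - Q s) / 2)) -> (forall s, is_derive cx s (l * (P s + Q s) / 2)) ->
  realizes tau l ct cx.
Proof.
  intros Hl HP HPQ dP dQ dct dcx.
  assert (HQ : forall s, Q s = / P s).
  { intro s. specialize (HP s). specialize (HPQ s). field_simplify_eq; lra. }
  assert (Dct : forall s, Derive ct s = l * (P s - Q s) / 2) by (intro; apply is_derive_unique, dct).
  assert (Dcx : forall s, Derive cx s = l * (P s + Q s) / 2) by (intro; apply is_derive_unique, dcx).
  assert (Mk : forall s, mink (vel ct cx s) (vel ct cx s) = l ^ 2).
  { intro s. unfold mink, vel; simpl. rewrite Dct, Dcx, HQ. field. specialize (HP s); lra. }
  split; [|split].
  - intro s. rewrite Mk. nra.
  - exact Mk.
  - intro s. unfold future_unit_normal. rewrite Mk, sqrt_pow2 by lra.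
    unfold vel, acc; simpl. rewrite Dct, Dcx.
    assert (A1 : Derive (fun x => Derive ct x) s = l/2 * (l * tau s * P s) + (-(l/2)) * (- (l * tau s * Q s))).
    { apply is_derive_unique. apply (is_derive_lin2' P Q _ s (l * tau s * P s) (- (l * tau s * Q s)) (l/2) (-(l/2)) 0); auto.
      intro; rewrite Dct; field. }
    assert (A2 : Derive (fun x => Derive cx x) s = l/2 * (l * tau s * P s) + (l/2) * (- (l * tau s * Q s))).
    { apply is_derive_unique. apply (is_derive_lin2' P Q _ s (l * tau s * P s) (- (l * tau s * Q s)) (l/2) (l/2) 0); auto.
      intro; rewrite Dcx; field. }
    change (fun x0 => ct x0) with ct; change (fun x0 => cx x0) with cx.
    rewrite A1, A2.
    assert (HQs : 0 < Q s) by (rewrite HQ; apply Rinv_0_lt_compat, HP).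
    destruct (Rlt_dec 0 (l * (P s + Q s) / 2)) as [_|n].
    2:{ exfalso; apply n. specialize (HP s). nra. }
    unfold mink; simpl. rewrite HQ. field. specialize (HP s); lra.
Qed.

Lemma exRI (f : R -> R) a b : (forall x, continuous f x) -> @ex_RInt R_NormedModule f a b.
Proof. intros H; apply (ex_RInt_continuous (V:=R_CompleteNormedModule)); auto. Qed.

Lemma per_int (f : R -> R) lam : (forall x, continuous f x) -> (forall y, f (y + 1) = lam * f y) ->
  forall s, @eq R (RInt f 0 (s + 1)) (RInt f 0 1 + lam * RInt f 0 s).
Proof.
  intros Hc Hp s.
  assert (E := RInt_comp_lin (V:=R_CompleteNormedModule) f 1 1 0 s (exRI f _ _ Hc)).
  replace (1 * 0 + 1) with 1 in E by ring. replace (1 * s + 1) with (s + 1) in E by ring.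
  rewrite <- (RInt_Chasles (V:=R_CompleteNormedModule) f 0 1 (s+1)) by (apply exRI; auto).
  rewrite <- E. unfold plus; simpl. f_equal.
  rewrite (RInt_ext (V:=R_CompleteNormedModule) _ (fun y => scal lam (f y))).
  - rewrite (RInt_scal (V:=R_CompleteNormedModule)) by (apply exRI; auto). reflexivity.
  - intros x _. unfold scal; simpl. unfold mult; simpl.
    replace (1 * x + 1) with (x + 1) by ring. rewrite Hp. ring.
Qed.

Lemma int_incr (f : R -> R) : (forall x, continuous f x) -> (forall x, 0 < f x) ->
  forall a b, a < b -> RInt f 0 a < RInt f 0 b.
Proof.
  intros Hc Hp a b Hab.
  rewrite <- (RInt_Chasles (V:=R_CompleteNormedModule) f 0 a b) by (apply exRI; auto).
  unfold plus; simpl.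
  assert (0 < RInt f a b) by (apply RInt_gt_0; auto).
  lra.
Qed.

Lemma int_pos01 (f : R -> R) : (forall x, continuous f x) -> (forall x, 0 < f x) -> 0 < @RInt R_CompleteNormedModule f 0 1.
Proof. intros; apply RInt_gt_0; auto; lra. Qed.

Lemma is_derive_int (f : R -> R) s : (forall x, continuous f x) -> is_derive (fun s => @RInt R_CompleteNormedModule f 0 s) s (f s).
Proof.
  intros Hc. apply (is_derive_RInt f _ 0); auto.
  apply filter_forall. intro y. apply (RInt_correct (V:=R_CompleteNormedModule)), exRI; auto.
Qed.

Lemma iter_mul (g : R -> R) Psi : (forall s, g (s + 1) = exp Psi * g s) ->
  forall m s, g (s + IZR m) = exp (IZR m * Psi) * g s.
Proof.
  intros H m. induction m using Z.peano_ind; intro s.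
  - simpl. rewrite Rplus_0_r, Rmult_0_l, exp_0; ring.
  - rewrite succ_IZR. replace (s + (IZR m + 1)) with ((s + IZR m) + 1) by ring.
    rewrite H, IHm. replace ((IZR m + 1) * Psi) with (IZR m * Psi + Psi) by ring.
    rewrite exp_plus; ring.
  - rewrite <- Z.sub_1_r, minus_IZR.
    replace (s + (IZR m - 1)) with ((s - 1) + IZR m) by ring. rewrite IHm.
    replace (g s) with (g ((s - 1) + 1)) by (f_equal; ring). rewrite H.
    replace (IZR m * Psi) with ((IZR m - 1) * Psi + Psi) by ring.
    rewrite exp_plus; ring.
Qed.

Lemma iter_add (g : R -> R) L : (forall s, g (s + 1) = g s + L) ->
  forall m s, g (s + IZR m) = g s + IZR m * L.
Proof.
  intros H m. induction m using Z.peano_ind; intro s.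
  - simpl. rewrite Rplus_0_r; ring.
  - rewrite succ_IZR. replace (s + (IZR m + 1)) with ((s + IZR m) + 1) by ring.
    rewrite H, IHm. ring.
  - rewrite <- Z.sub_1_r, minus_IZR.
    replace (s + (IZR m - 1)) with ((s - 1) + IZR m) by ring. rewrite IHm.
    replace (g s) with (g ((s - 1) + 1)) by (f_equal; ring). rewrite H. ring.
Qed.

Lemma strict_inj (g : R -> R) : (forall a b, a < b -> g a < g b) -> forall a b, g a = g b -> a = b.
Proof.
  intros H a b E. destruct (Rtotal_order a b) as [h|[h|h]]; auto;
  apply H in h; lra.
Qed.

Lemma Cn_lin2 n f g a b c : Cn n f -> Cn n g -> Cn n (fun x => c + (a * f x + b * g x)).
Proof.
  intros Hf Hg.
  apply (Cn_plus n (fun _ => c) (fun x => a * f x + b * g x)); [apply Cn_const|].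
  apply (Cn_plus n (fun x => a * f x) (fun x => b * g x));
  apply (Cn_mult n (fun _ => _)); auto; apply Cn_const.
Qed.

Lemma Cn_RInt_all (f : R -> R) : (forall n, Cn n f) -> forall n, Cn n (fun s => @RInt R_CompleteNormedModule f 0 s).
Proof. intros H n. apply Cn_S, Cn_S, Cn_RInt, H. Qed.

Lemma is_derive_eq (f : R -> R) x a b : is_derive f x a -> a = b -> is_derive f x b.
Proof. intros H ->; exact H. Qed.

Lemma build (tau : R -> R) l (th : R -> R) alpha c1 c2 (P Q ct cx : R -> R) : 0 < l -> 0 < alpha ->
  (forall n, Cn n th) -> (forall s, is_derive th s (l * tau s)) ->
  (forall s, P s = alpha * exp (th s)) -> (forall s, Q s = / alpha * exp (- th s)) ->
  (forall s, ct s = c1 + (l/2 * RInt P 0 s + (-(l/2)) * RInt Q 0 s)) ->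
  (forall s, cx s = c2 + (l/2 * RInt P 0 s + l/2 * RInt Q 0 s)) ->
  smooth ct /\ smooth cx /\ realizes tau l ct cx /\ (forall s, vel ct cx s <> (0, 0)) /\
  (forall x, continuous P x) /\ (forall x, continuous Q x) /\
  (forall x, 0 < P x) /\ (forall x, 0 < Q x).
Proof.
  intros Hl Ha Cth dth hP hQ hct hcx.
  assert (CP : forall n, Cn n P).
  { intro n. apply (Cn_ext n (fun s => alpha * exp (th s))); [intro; symmetry; auto|].
    apply (Cn_mult n (fun _ => alpha) (fun s => exp (th s))); [apply Cn_const|].
    apply Cn_comp; auto. apply Cn_exp. }
  assert (CQ : forall n, Cn n Q).
  { intro n. apply (Cn_ext n (fun s => / alpha * exp (- th s))); [intro; symmetry; auto|].
    apply (Cn_mult n (fun _ => / alpha) (fun s => exp (- th s))); [apply Cn_const|].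
    apply (Cn_comp n (fun s => - th s) exp); [|apply Cn_exp].
    apply (Cn_ext n (fun s => 0 + (-1 * th s + 0 * th s))); [intro; ring|].
    apply Cn_lin2; auto. }
  assert (cP : forall x, continuous P x) by (apply (Cn_cont 0), CP).
  assert (cQ : forall x, continuous Q x) by (apply (Cn_cont 0), CQ).
  assert (pP : forall x, 0 < P x) by (intro; rewrite hP; apply Rmult_lt_0_compat; auto; apply exp_pos).
  assert (pQ : forall x, 0 < Q x) by (intro; rewrite hQ; apply Rmult_lt_0_compat;
     [apply Rinv_0_lt_compat; auto| apply exp_pos]).
  assert (dP : forall s, is_derive P s (l * tau s * P s)).
  { intro s. apply (is_derive_ext (fun s => alpha * exp (th s))); [intro; symmetry; auto|].
    apply (is_derive_eq _ _ (alpha * scal (l * tau s) (exp (th s)))).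
    apply is_derive_scal. apply (is_derive_comp exp th); auto. apply is_derive_exp.
    rewrite hP. unfold scal; simpl; unfold mult; simpl; ring. }
  assert (dQ : forall s, is_derive Q s (- (l * tau s * Q s))).
  { intro s. apply (is_derive_ext (fun s => / alpha * exp (- th s))); [intro; symmetry; auto|].
    apply (is_derive_eq _ _ (/ alpha * scal (-1 * (l * tau s) + 0 * (l * tau s)) (exp (- th s)))).
    apply is_derive_scal. apply (is_derive_comp exp (fun s => - th s)). apply is_derive_exp.
    apply (is_derive_lin2' th th _ s (l * tau s) (l * tau s) (-1) 0 0); auto. intro; ring.
    rewrite hQ. unfold scal; simpl; unfold mult; simpl; ring. }
  assert (dct : forall s, is_derive ct s (l * (P s - Q s) / 2)).
  { intro s. apply (is_derive_lin2' (fun s => RInt P 0 s) (fun s => RInt Q 0 s) ct s (P s) (Q s) (l/2) (-(l/2)) c1).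
    apply is_derive_int; auto. apply is_derive_int; auto. auto. field. }
  assert (dcx : forall s, is_derive cx s (l * (P s + Q s) / 2)).
  { intro s. apply (is_derive_lin2' (fun s => RInt P 0 s) (fun s => RInt Q 0 s) cx s (P s) (Q s) (l/2) (l/2) c2).
    apply is_derive_int; auto. apply is_derive_int; auto. auto. field. }
  split; [|split; [|split; [|split]]]; auto.
  - unfold smooth; apply Cn_smooth_all. intro n. apply (Cn_ext n _ _ (fun s => eq_sym (hct s))).
    apply Cn_lin2; apply Cn_RInt_all; auto.
  - unfold smooth; apply Cn_smooth_all. intro n. apply (Cn_ext n _ _ (fun s => eq_sym (hcx s))).
    apply Cn_lin2; apply Cn_RInt_all; auto.
  - apply (realize_gen tau l ct cx P Q); auto.
    intro s. rewrite hP, hQ, exp_Ropp. field. split; [apply Rgt_not_eq, exp_pos| lra].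
  - intros s E. injection E as _ E2. rewrite (is_derive_unique _ _ _ (dcx s)) in E2.
    specialize (pP s); specialize (pQ s). nra.
Qed.

Lemma RInt_scal_R (f : R -> R) c a b : (forall x, continuous f x) ->
  RInt (fun x => c * f x) a b = c * RInt f a b.
Proof. intros H. apply (RInt_scal (V:=R_CompleteNormedModule)). apply exRI; auto. Qed.

Theorem proposition5p1 (tau : R -> R) (l : R) :
  smooth tau -> periodic1 tau -> 0 < l ->
  (RInt tau 0 1 <> 0 ->
     exists ct cx : R -> R,
       kasner_embedding (l * RInt tau 0 1) ct cx /\ realizes tau l ct cx) /\
  (RInt tau 0 1 = 0 ->
     exists L : R, 0 < L /\
       exists ct cx : R -> R, cylinder_embedding L ct cx /\ realizes tau l ct cx).
Proof.
  intros Hs Hp Hl.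
  assert (Ct : forall n, Cn n tau) by (intro n; apply smooth_Cn, Hs).
  assert (ctau : forall x, continuous tau x) by (apply (Cn_cont 0), Ct).
  set (T := @RInt R_CompleteNormedModule tau 0 1 : R).
  set (th := fun s => l * RInt tau 0 s).
  assert (Cth : forall n, Cn n th).
  { intro n. apply (Cn_ext n (fun s => 0 + (l * RInt tau 0 s + 0 * RInt tau 0 s))).
    intro; unfold th; ring. apply Cn_lin2; apply Cn_RInt_all; auto. }
  assert (dth : forall s, is_derive th s (l * tau s)).
  { intro s. apply is_derive_scal, is_derive_int; auto. }
  assert (pth : forall y, th (y + 1) = th y + l * T).
  { intro y. unfold th, T. rewrite (per_int tau 1 ctau). ring. intro; rewrite Hp; ring. }
  split.
  - intro HT. set (Psi := l * T).
    assert (HPsi : Psi <> 0) by (unfold Psi; intro E; apply Rmult_integral in E; lra).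
    set (P := fun s => 1 * exp (th s)).
    set (Q := fun s => / 1 * exp (- th s)).
    set (E1 := RInt P 0 1 : R). set (E2 := RInt Q 0 1 : R).
    set (a := l * E1 / (exp Psi - 1)). set (b := l * E2 / (1 - exp (- Psi))).
    set (ct := fun s => (a+b)/2 + (l/2 * RInt P 0 s + (-(l/2)) * RInt Q 0 s)).
    set (cx := fun s => (a-b)/2 + (l/2 * RInt P 0 s + l/2 * RInt Q 0 s)).
    destruct (build tau l th 1 ((a+b)/2) ((a-b)/2) P Q ct cx Hl Rlt_0_1 Cth dth)
      as (Sct & Scx & Rz & Vel & cP & cQ & pP & pQ); try (intro; reflexivity).
    set (U := fun s => a + l * RInt P 0 s). set (V := fun s => b - l * RInt Q 0 s).
    assert (hct : forall s, ct s = (U s + V s)/2) by (intro; unfold ct, U, V; field).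
    assert (hcx : forall s, cx s = (U s - V s)/2) by (intro; unfold cx, U, V; field).
    assert (ex1 : exp Psi <> 1).
    { intro E. apply HPsi. rewrite <- exp_0 in E. apply exp_inv in E; auto. }
    assert (ex2 : exp (- Psi) <> 1).
    { intro E. apply HPsi. rewrite <- exp_0 in E. apply exp_inv in E; lra. }
    assert (Pper : forall y, P (y+1) = exp Psi * P y).
    { intro; unfold P; rewrite pth, exp_plus; fold Psi; ring. }
    assert (Qper : forall y, Q (y+1) = exp (- Psi) * Q y).
    { intro; unfold Q; rewrite pth, Ropp_plus_distr, exp_plus; fold Psi; ring. }
    assert (Uper : forall s, U (s + 1) = exp Psi * U s).
    { intro s; unfold U; rewrite (per_int P _ cP Pper); fold E1; unfold a. field.
      intro E; apply ex1; lra. }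
    assert (Vper : forall s, V (s + 1) = exp (- Psi) * V s).
    { intro s; unfold V; rewrite (per_int Q _ cQ Qper); fold E2; unfold b. field.
      intro E; apply ex2; lra. }
    assert (Uinc : forall x y, x < y -> U x < U y).
    { intros x y h; unfold U. apply Rplus_lt_compat_l, Rmult_lt_compat_l; auto.
      apply int_incr; auto. }
    assert (Vdec : forall x y, x < y -> V y < V x).
    { intros x y h; unfold V. assert (RInt Q 0 x < RInt Q 0 y) by (apply int_incr; auto).
      nra. }
    exists ct, cx. split; [|exact Rz].
    split; [exact Sct|]. split; [exact Scx|]. split; [|split; [|split]].
    + exists 1%Z. intro s. unfold pt, boost; simpl. rewrite !hct, !hcx, Uper, Vper.
      unfold cosh, sinh. rewrite Rmult_1_l, exp_Ropp.
      assert (exp Psi <> 0) by (apply Rgt_not_eq, exp_pos).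
      f_equal; field; auto.
    + intro s. unfold kasner_domain, pt; simpl. rewrite hct, hcx.
      assert (h1 := Uinc s (s+1) ltac:(lra)). assert (h2 := Vdec s (s+1) ltac:(lra)).
      rewrite Uper in h1. rewrite Vper in h2.
      destruct (Rlt_dec 0 Psi) as [h|h].
      * assert (1 < exp Psi) by (rewrite <- exp_0; apply exp_increasing; lra).
        assert (exp (- Psi) < 1) by (rewrite <- exp_0; apply exp_increasing; lra).
        assert (0 < U s) by nra. assert (0 < V s) by nra.
        unfold Rabs; destruct Rcase_abs; lra.
      * assert (exp Psi < 1) by (rewrite <- exp_0; apply exp_increasing; lra).
        assert (1 < exp (- Psi)) by (rewrite <- exp_0; apply exp_increasing; lra).
        assert (U s < 0) by nra. assert (V s < 0) by nra.
        unfold Rabs; destruct Rcase_abs; lra.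
    + intros s s' m E. unfold pt, boost in E; simpl in E. injection E as E1' E2'.
      rewrite !hct, !hcx in E1'. rewrite !hct, !hcx in E2'.
      assert (HU : U s' = exp (IZR m * Psi) * U s).
      { unfold cosh, sinh in *. lra. }
      rewrite <- (iter_mul U Psi Uper) in HU.
      apply (strict_inj U Uinc) in HU. exists m; lra.
    + exact Vel.
  - intro HT. fold T in HT.
    assert (pth0 : forall y, th (y + 1) = th y) by (intro y; rewrite pth, HT; ring).
    set (P0 := fun s => exp (th s)). set (Q0 := fun s => exp (- th s)).
    assert (cP0 : forall x, continuous P0 x).
    { apply (Cn_cont 0). apply (Cn_comp 1 th exp); auto. apply Cn_exp. }
    assert (cQ0 : forall x, continuous Q0 x).
    { apply (Cn_cont 0). apply (Cn_comp 1 (fun s => - th s) exp); [|apply Cn_exp].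
      apply (Cn_ext 1 (fun s => 0 + (-1 * th s + 0 * th s))); [intro; ring|].
      apply Cn_lin2; auto. }
    set (E1 := RInt P0 0 1 : R). set (E2 := RInt Q0 0 1 : R).
    assert (pE1 : 0 < E1) by (apply int_pos01; auto; intro; apply exp_pos).
    assert (pE2 : 0 < E2) by (apply int_pos01; auto; intro; apply exp_pos).
    set (alpha := sqrt (E2 / E1)).
    assert (pa : 0 < alpha) by (apply sqrt_lt_R0; apply Rdiv_lt_0_compat; auto).
    assert (Haa : alpha * alpha = E2 / E1) by (apply sqrt_sqrt; apply Rlt_le, Rdiv_lt_0_compat; auto).
    assert (Ekey : alpha * E1 = / alpha * E2).
    { transitivity ((alpha * alpha) * E1 / alpha); [field; lra|]. rewrite Haa; field; lra. }
    set (P := fun s => alpha * exp (th s)).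
    set (Q := fun s => / alpha * exp (- th s)).
    set (ct := fun s => 0 + (l/2 * RInt P 0 s + (-(l/2)) * RInt Q 0 s)).
    set (cx := fun s => 0 + (l/2 * RInt P 0 s + l/2 * RInt Q 0 s)).
    destruct (build tau l th alpha 0 0 P Q ct cx Hl pa Cth dth)
      as (Sct & Scx & Rz & Vel & cP & cQ & pP & pQ); try (intro; reflexivity).
    assert (Pper : forall y, P (y+1) = 1 * P y) by (intro; unfold P; rewrite pth0; ring).
    assert (Qper : forall y, Q (y+1) = 1 * Q y) by (intro; unfold Q; rewrite pth0; ring).
    assert (IP1 : RInt P 0 1 = alpha * E1) by (apply (RInt_scal_R P0); auto).
    assert (IQ1 : RInt Q 0 1 = / alpha * E2) by (apply (RInt_scal_R Q0); auto).
    set (L := l/2 * (alpha * E1 + / alpha * E2)).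
    assert (pL : 0 < L).
    { unfold L. assert (0 < alpha * E1) by (apply Rmult_lt_0_compat; auto).
      assert (0 < / alpha * E2) by (apply Rmult_lt_0_compat; auto; apply Rinv_0_lt_compat; auto).
      apply Rmult_lt_0_compat; lra. }
    assert (ctper : forall s, ct (s + 1) = ct s).
    { intro s; unfold ct. rewrite (per_int P _ cP Pper), (per_int Q _ cQ Qper), IP1, IQ1, Ekey. ring. }
    assert (cxper : forall s, cx (s + 1) = cx s + L).
    { intro s; unfold cx, L. rewrite (per_int P _ cP Pper), (per_int Q _ cQ Qper), IP1, IQ1. ring. }
    assert (cxinc : forall x y, x < y -> cx x < cx y).
    { intros x y h; unfold cx.
      assert (RInt P 0 x < RInt P 0 y) by (apply int_incr; auto).
      assert (RInt Q 0 x < RInt Q 0 y) by (apply int_incr; auto).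
      nra. }
    exists L. split; [exact pL|]. exists ct, cx. split; [|exact Rz].
    split; [exact Sct|]. split; [exact Scx|]. split; [|split].
    + exists 1%Z. intro s. unfold pt, xshift; simpl. rewrite ctper, cxper. f_equal; ring.
    + intros s s' m E. unfold pt, xshift in E; simpl in E. injection E as _ E2'.
      rewrite <- (iter_add cx L cxper) in E2'.
      apply (strict_inj cx cxinc) in E2'. exists m; lra.
    + exact Vel.
Qed.
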